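(* Let $a,b,g,m,n>0$ and $0<e<1$, and consider the planar system $$\dot x=a-ex-\frac{xy}{1+gy},\qquad \dot y=\frac{xy}{1+gy}-y-\frac{my}{b+ny}.$$ Let $E_0=\left(\frac{a}{e},0\right)$ be its disease-free equilibrium. Then: (1) if $a<\frac{e(m+b)}{b}$, $E_0$ is locally asymptotically stable and is a stable node; if $a>\frac{e(m+b)}{b}$, $E_0$ is a saddle point; (2) if $a=\frac{e(m+b)}{b}$ and $n\neq\frac{(eg+1)b^2+m(eg+1)b}{me}$, then $E_0$ is a saddle-node.
   Context: The system is a rescaled SIR epidemic model with saturated infection rate and saturated treatment rate; $x$ is the (rescaled) susceptible population and $y$ the (rescaled) infected population. *)

(* Defs.v *)
From Stdlib Require Import Reals.
From Coquelicot Require Import Coquelicot.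
Open Scope R_scope.

Definition dx (f : R -> R -> R) (x y : R) : R := Derive (fun u => f u y) x.
Definition dy (f : R -> R -> R) (x y : R) : R := Derive (fun v => f x v) y.

Definition dxx (f : R -> R -> R) (x y : R) : R := Derive (fun u => dx f u y) x.
Definition dxy (f : R -> R -> R) (x y : R) : R := Derive (fun v => dx f x v) y.
Definition dyy (f : R -> R -> R) (x y : R) : R := Derive (fun v => dy f x v) y.

Definition is_equilibrium (P Q : R -> R -> R) (x0 y0 : R) : Prop :=
  P x0 y0 = 0 /\ Q x0 y0 = 0.

Definition jac_tr (P Q : R -> R -> R) (x0 y0 : R) : R := dx P x0 y0 + dy Q x0 y0.
Definition jac_det (P Q : R -> R -> R) (x0 y0 : R) : R :=
  dx P x0 y0 * dy Q x0 y0 - dy P x0 y0 * dx Q x0 y0.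

(* l1, l2 are the (real) eigenvalues of the Jacobian at (x0,y0), i.e. the
   characteristic polynomial is (X - l1)(X - l2). *)
Definition jac_eigenvalues (P Q : R -> R -> R) (x0 y0 l1 l2 : R) : Prop :=
  l1 + l2 = jac_tr P Q x0 y0 /\ l1 * l2 = jac_det P Q x0 y0.

Definition stable_node (P Q : R -> R -> R) (x0 y0 : R) : Prop :=
  is_equilibrium P Q x0 y0 /\
  exists l1 l2, jac_eigenvalues P Q x0 y0 l1 l2 /\ l1 < 0 /\ l2 < 0.

Definition saddle (P Q : R -> R -> R) (x0 y0 : R) : Prop :=
  is_equilibrium P Q x0 y0 /\
  exists l1 l2, jac_eigenvalues P Q x0 y0 l1 l2 /\ l1 < 0 < l2.

(* Saddle-node: equilibrium whose Jacobian has a simple zero eigenvalue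
   (det = 0, trace <> 0), and whose center-manifold reduction has a nonzero
   quadratic coefficient: for a right null vector v and a left null vector w
   of the Jacobian, w . D^2F(x0,y0)[v,v] <> 0. *)
Definition hess_vv (f : R -> R -> R) (x0 y0 v1 v2 : R) : R :=
  v1 ^ 2 * dxx f x0 y0 + 2 * v1 * v2 * dxy f x0 y0 + v2 ^ 2 * dyy f x0 y0.

Definition saddle_node (P Q : R -> R -> R) (x0 y0 : R) : Prop :=
  is_equilibrium P Q x0 y0 /\
  jac_det P Q x0 y0 = 0 /\ jac_tr P Q x0 y0 <> 0 /\
  exists v1 v2 w1 w2 : R,
    (v1 <> 0 \/ v2 <> 0) /\ (w1 <> 0 \/ w2 <> 0) /\
    dx P x0 y0 * v1 + dy P x0 y0 * v2 = 0 /\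
    dx Q x0 y0 * v1 + dy Q x0 y0 * v2 = 0 /\
    w1 * dx P x0 y0 + w2 * dx Q x0 y0 = 0 /\
    w1 * dy P x0 y0 + w2 * dy Q x0 y0 = 0 /\
    w1 * hess_vv P x0 y0 v1 v2 + w2 * hess_vv Q x0 y0 v1 v2 <> 0.

Definition is_solution_on (P Q : R -> R -> R) (T : Rbar) (X Y : R -> R) : Prop :=
  forall t, 0 <= t -> Rbar_lt t T ->
    is_derive X t (P (X t) (Y t)) /\ is_derive Y t (Q (X t) (Y t)).

Definition dist2 (x y x0 y0 : R) : R := sqrt ((x - x0) ^ 2 + (y - y0) ^ 2).

Definition locally_asymptotically_stable (P Q : R -> R -> R) (x0 y0 : R) : Prop :=
  is_equilibrium P Q x0 y0 /\
  (forall eps, 0 < eps -> exists delta, 0 < delta /\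
     forall (T : Rbar) (X Y : R -> R), is_solution_on P Q T X Y ->
       dist2 (X 0) (Y 0) x0 y0 < delta ->
       forall t, 0 <= t -> Rbar_lt t T -> dist2 (X t) (Y t) x0 y0 < eps) /\
  (exists delta, 0 < delta /\
     forall X Y : R -> R, is_solution_on P Q p_infty X Y ->
       dist2 (X 0) (Y 0) x0 y0 < delta ->
       is_lim X p_infty x0 /\ is_lim Y p_infty y0).

(* Main.v *)
Require Import Defs.
From Stdlib Require Import Reals Lra Psatz.
From Coquelicot Require Import Coquelicot.
Open Scope R_scope.

Lemma Rbar_lt_down (s t : R) (T : Rbar) : s <= t -> Rbar_lt t T -> Rbar_lt s T.
Proof. intros H1 H2. apply Rbar_le_lt_trans with (Finite t); simpl; auto. Qed.

Lemma cont_lt (W : R -> R) (x l r : R) : is_derive W x l -> W x < r ->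
  exists d, 0 < d /\ forall y, Rabs (y - x) < d -> W y < r.
Proof.
  intros HD Hr.
  apply is_derive_Reals in HD.
  assert (Hc : continuity_pt W x).
  { apply derivable_continuous_pt. exists l. exact HD. }
  destruct (Hc (r - W x)) as [d [Hd Hy]]. lra.
  exists d; split; auto. intros y Hy'.
  destruct (Req_dec y x) as [->|Hne]. lra.
  assert (H := Hy y). simpl in H. unfold R_dist in H.
  assert (Rabs (W y - W x) < r - W x). { apply H. split; [unfold D_x, no_cond; split; auto|exact Hy']. }
  apply Rabs_def2 in H0. lra.
Qed.

Lemma mono_le (f df : R -> R) (a b : R) : a <= b ->
  (forall x, a <= x <= b -> is_derive f x (df x)) ->
  (forall x, a < x < b -> df x <= 0) -> f b <= f a.
Proof.
  intros Hab HD Hn. destruct (Req_dec a b) as [->|Hne]. lra.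
  destruct (MVT_cor2 f df a b) as [c [Hc1 Hc2]]. lra.
  intros c Hc. apply is_derive_Reals, HD; auto.
  assert (df c <= 0) by (apply Hn; auto). nra.
Qed.

Lemma barrier (W W' : R -> R) (T : Rbar) (r : R) :
  (forall t, 0 <= t -> Rbar_lt t T -> is_derive W t (W' t)) ->
  (forall t, 0 <= t -> Rbar_lt t T -> W t < r -> W' t <= 0) ->
  W 0 < r -> forall t, 0 <= t -> Rbar_lt t T -> W t < r.
Proof.
  intros HD Hn H0 t1 Ht1 HT1.
  destruct (Rlt_or_le (W t1) r) as [|Hge]; auto. exfalso.
  set (E := fun s => 0 <= s <= t1 /\ forall tau, 0 <= tau <= s -> W tau < r).
  destruct (completeness E) as [s0 [Hub Hlub]].
  { exists t1. intros s [Hs _]. lra. }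
  { exists 0. split. lra. intros tau Htau. replace tau with 0 by lra. auto. }
  assert (Hs0 : 0 <= s0) by (apply Hub; split; [lra| intros tau Htau; replace tau with 0 by lra; auto]).
  assert (Hs1 : s0 <= t1) by (apply Hlub; intros s [Hs _]; lra).
  assert (HA : forall tau, 0 <= tau < s0 -> W tau < r).
  { intros tau Htau. destruct (Rlt_or_le (W tau) r) as [|Hw]; auto.
    assert (s0 <= tau). { apply Hlub. intros s [Hs Hs']. destruct (Rle_lt_dec s tau); auto.
      assert (W tau < r) by (apply Hs'; lra). lra. } lra. }
  assert (HB : W s0 < r).
  { assert (W s0 <= W 0). { apply (mono_le W W'). lra.
      intros x Hx. apply HD. lra. apply Rbar_lt_down with t1; auto; lra.
      intros x Hx. apply Hn. lra. apply Rbar_lt_down with t1; auto; lra. apply HA; lra. }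
    lra. }
  destruct (cont_lt W s0 (W' s0) r) as [d [Hd Hnb]]; auto.
  apply HD; auto. apply Rbar_lt_down with t1; auto.
  destruct (Req_dec s0 t1) as [<-|Hne]. lra.
  set (s1 := Rmin (s0 + d/2) t1).
  assert (s1 <= s0). { apply Hub. split. split. unfold s1; apply Rmin_case; lra.
     apply Rmin_r.
     intros tau Htau. destruct (Rlt_or_le tau s0). apply HA; lra. apply Hnb.
     assert (tau <= s0 + d/2) by (apply Rle_trans with s1; [lra|apply Rmin_l]).
     apply Rabs_def1; lra. }
  unfold s1 in H. revert H. apply Rmin_case; lra.
Qed.

Lemma decay (W W' : R -> R) (k : R) : 0 <= k ->
  (forall t, 0 <= t -> is_derive W t (W' t)) ->
  (forall t, 0 <= t -> W' t <= - k * W t) ->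
  (forall t, 0 <= t -> 0 <= W t) ->
  forall t, 0 <= t -> W t * (1 + k * t) <= W 0.
Proof.
  intros hk HD Hn Hp t Ht.
  assert (H := mono_le (fun s => W s * (1 + k*s)) (fun s => W' s * (1 + k*s) + W s * k) 0 t Ht).
  simpl in H. replace (W 0) with (W 0 * (1 + k*0)) by ring. apply H.
  - intros x Hx. apply (is_derive_mult W (fun s => 1 + k*s) x (W' x) k).
    apply HD; lra.
    auto_derive; auto; ring.
    intros; apply Rmult_comm.
  - intros x Hx. assert (h1 := Hn x ltac:(lra)). assert (h2 := Hp x ltac:(lra)).
    assert (0 <= k*x) by nra.
    assert (W' x * (1 + k*x) <= -k * W x * (1+k*x)) by (apply Rmult_le_compat_r; lra).
    assert (0 <= k * x * (k * W x)) by (apply Rmult_le_pos; nra). nra.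
Qed.
Lemma div_le_aux (A s x R0 : R) : A * s = x -> 1/2 < s -> x <= R0 -> 0 <= R0 -> A <= 2 * R0.
Proof. intros. destruct (Rle_lt_dec A (2*R0)); auto. nra. Qed.

Lemma h_bound (b g m n x0 c0 rho x y : R) : 0<b -> 0<g -> 0<m -> 0<n -> 0<x0 ->
  c0 = 1 + m/b - x0 -> 0 < c0 -> 0 < rho -> rho <= 1 -> rho <= 1/(2*g) -> rho <= b/(2*n) ->
  rho*(2*(1+g*x0) + 2*(m*n/(b*b))) <= c0/2 -> -rho < x - x0 < rho -> -rho < y < rho ->
  Rabs (x/(1+g*y)) <= 2*(x0+1) /\ x/(1+g*y) - 1 - m/(b+n*y) <= -c0/2.
Proof.
  intros hb hg hm hn hx0 hc0 hc0p hr hr1 hrg hrn hrD hx hy.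
  assert (h2g : 2*g*rho <= 1). { apply Rmult_le_compat_l with (r := 2*g) in hrg; [|lra].
    replace (2*g*(1/(2*g))) with 1 in hrg by (field; lra). lra. }
  assert (h2n : 2*n*rho <= b). { apply Rmult_le_compat_l with (r := 2*n) in hrn; [|lra].
    replace (2*n*(b/(2*n))) with b in hrn by (field; lra). lra. }
  assert (hs : 1/2 < 1 + g*y) by nra.
  assert (hq : b/2 < b + n*y) by nra.
  set (A := x/(1+g*y)). set (B := m/(b+n*y)).
  assert (HA : A * (1+g*y) = x) by (unfold A; field; lra).
  assert (HB : B * (b+n*y) = m) by (unfold B; field; lra).
  clearbody A B.
  split.
  - apply Rabs_le. split.
    + assert (-A <= 2*(x0+1)); [|lra]. apply (div_le_aux (-A) (1+g*y) (-x)); nra.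
    + apply (div_le_aux A (1+g*y) x); nra.
  - assert (H1 : A - x0 <= 2*(rho*(1+g*x0))).
    { apply (div_le_aux (A - x0) (1+g*y) (x - x0 - g*x0*y)).
      rewrite Rmult_minus_distr_r, HA; ring. lra.
      assert (0 < g*x0) by nra. assert (0 < (g*x0)*(rho+y)) by (apply Rmult_lt_0_compat; lra). nra.
      assert (0 < g*x0) by nra. nra. }
    assert (H2 : m/b - B <= 2*(m*n*rho/(b*b))).
    { apply (div_le_aux (m/b - B) ((b + n*y)/b) (m*n*y/(b*b))).
      replace ((m/b - B)*((b+n*y)/b)) with (m*(b+n*y)/(b*b) - (B*(b+n*y))/b) by (field; lra).
      rewrite HB. field. lra.
      apply Rmult_lt_reg_r with b; auto. field_simplify; lra.
      unfold Rdiv. apply Rmult_le_compat_r. apply Rlt_le, Rinv_0_lt_compat; nra.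
      apply Rmult_le_compat_l; nra.
      unfold Rdiv; repeat apply Rmult_le_pos; try lra; apply Rlt_le, Rinv_0_lt_compat; nra. }
    assert (m*n*rho/(b*b) = rho * (m*n/(b*b))) by (field; lra).
    nra.
Qed.

Lemma key (e K c0 C u y A h : R) : 0 < e -> Rabs A <= C -> h <= -c0/2 -> 0 <= K ->
  C*C <= e*(K*c0 - 1) ->
  2*u*(-e*u - y*A) + 2*K*(y*y)*h <= -e*(u*u) - y*y.
Proof.
  intros he hA hh hK hC.
  assert (hA2 : A*A <= C*C).
  { assert (0 <= Rabs A) by apply Rabs_pos. destruct (Rcase_abs A) as [HA0|HA0].
    rewrite Rabs_left in hA; nra. rewrite Rabs_right in hA; nra. }
  assert (h1 : 2*K*(y*y)*h <= -K*c0*(y*y)).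
  { assert (0 <= K*(y*y)) by nra. nra. }
  assert (h2 : 0 <= (e*u + y*A)*(e*u+y*A)) by (pose proof (Rle_0_sqr (e*u+y*A)); unfold Rsqr in *; lra).
  assert (h3 : (y*y)*(A*A) <= (y*y)*(e*(K*c0-1))).
  { apply Rmult_le_compat_l. nra. lra. }
  assert (h4 : e * (2*u*(-e*u - y*A) + 2*K*(y*y)*h) <= e * (-e*(u*u) - y*y)) by nra.
  apply Rmult_le_reg_l with e; auto.
Qed.
Lemma W_deriv (X Y : R -> R) t dX dY x0 K : is_derive X t dX -> is_derive Y t dY ->
  is_derive (fun s => (X s - x0)*(X s - x0) + K*(Y s * Y s)) t (2*(X t - x0)*dX + 2*K*(Y t)*dY).
Proof.
  intros HX HY.
  assert (H1 : is_derive (fun s => (X s - x0)*(X s - x0)) t (dX * (2*(X t - x0)))).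
  { apply (is_derive_comp (fun z => (z - x0)*(z-x0)) X t). auto_derive; auto; ring. exact HX. }
  assert (H2 : is_derive (fun s => K*(Y s * Y s)) t (dY * (2*K*Y t))).
  { apply (is_derive_comp (fun z => K*(z*z)) Y t). auto_derive; auto; ring. exact HY. }
  assert (H3 := is_derive_plus _ _ _ _ _ H1 H2). simpl in H3.
  replace (2*(X t - x0)*dX + 2*K*(Y t)*dY) with (dX * (2*(X t - x0)) + dY * (2*K*Y t)) by ring.
  exact H3.
Qed.

Lemma dxP a e g x y : Derive (fun u => a - e * u - u * y / (1 + g * y)) x = -e - y/(1+g*y).
Proof.
  rewrite (Derive_ext _ (fun u => a - e*u - u * (y/(1+g*y)))).
  apply is_derive_unique. auto_derive; auto; ring.
  intros; unfold Rdiv; ring.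
Qed.
Lemma dxQ b g m n x y : Derive (fun u => u * y / (1 + g * y) - y - m * y / (b + n * y)) x = y/(1+g*y).
Proof.
  rewrite (Derive_ext _ (fun u => u * (y/(1+g*y)) - y - m * y / (b + n * y))).
  apply is_derive_unique. auto_derive; auto; ring.
  intros; unfold Rdiv; ring.
Qed.
Lemma dyP a e g x : 0 < g -> Derive (fun v => a - e * x - x * v / (1 + g * v)) 0 = -x.
Proof. intros. apply is_derive_unique. auto_derive. lra. field. Qed.
Lemma dyQ b g m n x y : 0 < b -> 0 < n -> 0 < g -> 1 + g*y <> 0 -> b + n*y <> 0 ->
  Derive (fun v => x * v / (1 + g * v) - v - m * v / (b + n * v)) y = x/((1+g*y)*(1+g*y)) - 1 - m*b/((b+n*y)*(b+n*y)).
Proof. intros. apply is_derive_unique. auto_derive. tauto. field. tauto. Qed.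
Lemma dyyQ b g m n x : 0 < b -> 0 < n -> 0 < g ->
  Derive (fun v => Derive (fun w => x * w / (1 + g * w) - w - m * w / (b + n * w)) v) 0
  = -2*g*x + 2*m*n/(b*b).
Proof.
  intros hb hn hg.
  rewrite (Derive_ext_loc _ (fun v => x/((1+g*v)*(1+g*v)) - 1 - m*b/((b+n*v)*(b+n*v)))).
  - apply is_derive_unique. auto_derive. split; [|split; auto]; apply Rmult_integral_contrapositive; split; lra. field. lra.
  - apply (locally_interval _ 0 (- Rmin (1/g) (b/n)) (Rmin (1/g) (b/n))).
    + simpl. assert (0 < Rmin (1/g) (b/n)) by (apply Rmin_case; apply Rdiv_lt_0_compat; lra). lra.
    + simpl. apply Rmin_case; apply Rdiv_lt_0_compat; lra.
    + intros y H1 H2. simpl in H1, H2.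
      assert (Hg : g * y > -1). { assert (- (1/g) < y) by (eapply Rle_lt_trans; [|exact H1]; apply Ropp_le_contravar, Rmin_l).
        apply Rmult_lt_compat_l with (r := g) in H; auto. replace (g * - (1/g)) with (-1) in H by (field; lra). lra. }
      assert (Hn : n * y > -b). { assert (- (b/n) < y) by (eapply Rle_lt_trans; [|exact H1]; apply Ropp_le_contravar, Rmin_r).
        apply Rmult_lt_compat_l with (r := n) in H; auto. replace (n * - (b/n)) with (-b) in H by (field; lra). lra. }
      apply dyQ; auto; lra.
Qed.

Lemma sq_bound (u r : R) : 0 < r -> u*u < r*r -> -r < u < r.
Proof.
  intros hr h. split; destruct (Rlt_or_le (-r) u) as [H|H]; try lra;
  destruct (Rlt_or_le u r) as [H'|H']; try lra; nra.
Qed.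

Lemma lim_from_decay (W Z : R -> R) z0 k W0 : 0 < k -> 0 <= W0 ->
  (forall t, 0 <= t -> W t * (1 + k*t) <= W0) ->
  (forall t, 0 <= t -> (Z t - z0)*(Z t - z0) <= W t) -> is_lim Z p_infty z0.
Proof.
  intros hk hW0 HD HZ. apply is_lim_spec. intros eps. simpl.
  assert (he : 0 < eps) by apply cond_pos.
  assert (hke : 0 < k*(eps*eps)) by (apply Rmult_lt_0_compat; [lra| apply Rmult_lt_0_compat; lra]).
  exists (W0/(k*(eps*eps))). intros t Ht.
  assert (hM : 0 <= W0/(k*(eps*eps))) by (apply Rmult_le_pos; [lra| apply Rlt_le, Rinv_0_lt_compat; lra]).
  assert (ht : 0 <= t) by lra.
  assert (H1 := HD t ht). assert (H2 := HZ t ht).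
  assert (H3 : k*(eps*eps)*t > W0).
  { apply Rmult_lt_compat_l with (r := k*(eps*eps)) in Ht; [|lra].
    replace (k*(eps*eps)*(W0/(k*(eps*eps)))) with W0 in Ht by (field; split; lra). lra. }
  assert (H4 : W t < eps*eps).
  { destruct (Rlt_or_le (W t) (eps*eps)) as [|H]; auto.
    assert (eps*eps*(1+k*t) <= W t * (1+k*t)) by (apply Rmult_le_compat_r; nra). nra. }
  assert (H5 := sq_bound (Z t - z0) eps he ltac:(lra)).
  apply Rabs_def1; lra.
Qed.

Theorem theorem2p1 (a b g m n e : R)
  (ha : 0 < a) (hb : 0 < b) (hg : 0 < g) (hm : 0 < m) (hn : 0 < n)
  (he0 : 0 < e) (he1 : e < 1) :
  let P := fun x y => a - e * x - x * y / (1 + g * y) in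
  let Q := fun x y => x * y / (1 + g * y) - y - m * y / (b + n * y) in
  (a < e * (m + b) / b ->
     locally_asymptotically_stable P Q (a / e) 0 /\ stable_node P Q (a / e) 0) /\
  (a > e * (m + b) / b -> saddle P Q (a / e) 0) /\
  (a = e * (m + b) / b ->
     n <> ((e * g + 1) * b ^ 2 + m * (e * g + 1) * b) / (m * e) ->
     saddle_node P Q (a / e) 0).
Proof.
  intros P Q.
  set (x0 := a / e).
  assert (hx0 : 0 < x0) by (unfold x0; apply Rdiv_lt_0_compat; lra).
  assert (hae : a = e * x0) by (unfold x0; field; lra).
  assert (JxP : dx P x0 0 = -e).
  { unfold dx, P. rewrite dxP. unfold Rdiv. ring. }
  assert (JyP : dy P x0 0 = -x0).
  { unfold dy, P. apply dyP; auto. }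
  assert (JxQ : dx Q x0 0 = 0).
  { unfold dx, Q. rewrite dxQ. unfold Rdiv. ring. }
  assert (JyQ : dy Q x0 0 = x0 - 1 - m/b).
  { unfold dy, Q. rewrite dyQ; try lra. field. lra. }
  assert (Heq : is_equilibrium P Q x0 0).
  { unfold is_equilibrium, P, Q. split. rewrite hae. unfold Rdiv. ring. unfold Rdiv. ring. }
  split; [|split].
  - intros Ha.
    assert (hc0 : 0 < 1 + m/b - x0).
    { assert (x0 < (m+b)/b). { unfold x0. apply Rmult_lt_reg_r with e; auto.
      replace (a/e*e) with a by (field; lra). replace ((m+b)/b*e) with (e*(m+b)/b) by (field; lra). lra. }
      assert ((m+b)/b = 1 + m/b) by (field; lra). lra. }
    split; [|split; auto; exists (-e), (x0 - 1 - m/b);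
      unfold jac_eigenvalues, jac_tr, jac_det; rewrite JxP, JyP, JxQ, JyQ; split; [split; ring|lra]].
    remember (1 + m/b - x0) as c0 eqn:Ec0.
    remember (2*(x0+1)) as C eqn:EC.
    remember (1 + (C*C/e + 1)/c0) as K eqn:EK.
    assert (hK : 1 <= K). { rewrite EK. assert (0 <= (C*C/e+1)/c0); [|lra].
      apply Rmult_le_pos; [|apply Rlt_le, Rinv_0_lt_compat; lra].
      assert (0 <= C*C/e) by (apply Rmult_le_pos; [nra|apply Rlt_le, Rinv_0_lt_compat; lra]). lra. }
    assert (hKC : C*C <= e*(K*c0 - 1)).
    { rewrite EK. replace (e*((1 + (C*C/e+1)/c0)*c0 - 1)) with (e*c0 + C*C) by (field; lra). nra. }
    remember (e/K) as k eqn:Ek.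
    assert (hk : 0 < k) by (rewrite Ek; apply Rdiv_lt_0_compat; lra).
    assert (hkK : k * K = e) by (rewrite Ek; field; lra).
    assert (hke : k <= e) by nra.
    remember (2*(1+g*x0) + 2*(m*n/(b*b))) as D eqn:ED.
    assert (hD : 0 < D). { rewrite ED. assert (0 < m*n/(b*b)) by (apply Rdiv_lt_0_compat; nra). nra. }
    remember (Rmin (Rmin 1 (1/(2*g))) (Rmin (b/(2*n)) (c0/(2*D)))) as rho eqn:Erho.
    assert (hr0 : 0 < rho). { rewrite Erho. repeat apply Rmin_case; try lra; apply Rdiv_lt_0_compat; lra. }
    assert (hr1 : rho <= 1) by (rewrite Erho; eapply Rle_trans; [apply Rmin_l|apply Rmin_l]).
    assert (hr2 : rho <= 1/(2*g)) by (rewrite Erho; eapply Rle_trans; [apply Rmin_l|apply Rmin_r]).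
    assert (hr3 : rho <= b/(2*n)) by (rewrite Erho; eapply Rle_trans; [apply Rmin_r|apply Rmin_l]).
    assert (hr4 : rho * D <= c0/2).
    { assert (rho <= c0/(2*D)) by (rewrite Erho; eapply Rle_trans; [apply Rmin_r|apply Rmin_r]).
      apply Rmult_le_compat_r with (r := D) in H; [|lra].
      replace (c0/(2*D)*D) with (c0/2) in H by (field; lra). exact H. }
    assert (Hineq : forall x y, (x-x0)*(x-x0) + K*(y*y) < rho*rho ->
      2*(x-x0)*P x y + 2*K*y*Q x y <= -k*((x-x0)*(x-x0) + K*(y*y))).
    { intros x y Hw.
      assert (0 <= K*(y*y)) by (apply Rmult_le_pos; nra).
      assert (0 <= (x-x0)*(x-x0)) by (pose proof (Rle_0_sqr (x-x0)); unfold Rsqr in *; lra).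
      assert (Hu : -rho < x - x0 < rho) by (apply sq_bound; lra).
      assert (y*y <= K*(y*y)) by (assert (0 <= (K-1)*(y*y)) by (apply Rmult_le_pos; nra); nra).
      assert (Hy : -rho < y < rho) by (apply sq_bound; lra).
      destruct (h_bound b g m n x0 c0 rho x y) as [HA Hh]; auto.
      rewrite <- ED. exact hr4.
      assert (HP : P x y = -e*(x-x0) - y*(x/(1+g*y))) by (unfold P; rewrite hae; unfold Rdiv; ring).
      assert (HQ : Q x y = y*(x/(1+g*y) - 1 - m/(b+n*y))) by (unfold Q; unfold Rdiv; ring).
      rewrite HP, HQ. rewrite <- EC in HA.
      assert (Hk := key e K c0 C (x-x0) y (x/(1+g*y)) (x/(1+g*y) - 1 - m/(b+n*y)) he0 HA Hh ltac:(lra) hKC).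
      replace (2*K*y*(y*(x/(1+g*y) - 1 - m/(b+n*y)))) with (2*K*(y*y)*(x/(1+g*y) - 1 - m/(b+n*y))) by ring.
      assert (0 <= y*y) by (pose proof (Rle_0_sqr y); unfold Rsqr in *; lra).
      assert (k*(x-x0)*(x-x0) <= e*((x-x0)*(x-x0))) by nra.
      assert (k*(K*(y*y)) = e*(y*y)) by (rewrite <- hkK; ring).
      nra. }
    assert (Wpos : forall u y, 0 <= u*u + K*(y*y)).
    { intros u y. assert (0 <= u*u) by (pose proof (Rle_0_sqr u); unfold Rsqr in *; lra).
      assert (0 <= y*y) by (pose proof (Rle_0_sqr y); unfold Rsqr in *; lra).
      assert (0 <= K*(y*y)) by (apply Rmult_le_pos; lra). lra. }
    assert (Wle : forall u y, u*u + K*(y*y) <= K*(u^2 + (y-0)^2)).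
    { intros u y. assert (0 <= u*u) by (pose proof (Rle_0_sqr u); unfold Rsqr in *; lra).
      assert (0 <= (K-1)*(u*u)) by (apply Rmult_le_pos; lra).
      replace (K*(u^2 + (y-0)^2)) with (K*(u*u) + K*(y*y)) by ring. lra. }
    assert (Wge : forall u y, u^2 + (y-0)^2 <= u*u + K*(y*y)).
    { intros u y. assert (0 <= y*y) by (pose proof (Rle_0_sqr y); unfold Rsqr in *; lra).
      assert (0 <= (K-1)*(y*y)) by (apply Rmult_le_pos; lra).
      replace (u^2 + (y-0)^2) with (u*u + y*y) by ring. lra. }
    assert (Hsol : forall T X Y r, is_solution_on P Q T X Y -> 0 < r <= rho*rho ->
      (X 0 - x0)*(X 0 - x0) + K*(Y 0*Y 0) < r ->
      forall t, 0 <= t -> Rbar_lt t T -> (X t - x0)*(X t - x0) + K*(Y t * Y t) < r).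
    { intros T X Y r HS Hr H0.
      apply (barrier (fun s => (X s - x0)*(X s - x0) + K*(Y s * Y s))
        (fun s => 2*(X s - x0)*P (X s) (Y s) + 2*K*(Y s)*Q (X s) (Y s)) T r); auto.
      - intros t ht hT. destruct (HS t ht hT). apply W_deriv; auto.
      - intros t ht hT hW. simpl in hW.
        assert (H1 := Hineq (X t) (Y t) ltac:(lra)).
        assert (H2 := Wpos (X t - x0) (Y t)). nra. }
    assert (Hdelta : forall X Y r, 0 < r -> dist2 (X 0) (Y 0) x0 0 < sqrt (r / K) ->
      (X 0 - x0)*(X 0 - x0) + K*(Y 0*Y 0) < r).
    { intros X Y r hr Hd. unfold dist2 in Hd. apply sqrt_lt_0_alt in Hd.
      assert (H1 := Wle (X 0 - x0) (Y 0)).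
      apply Rmult_lt_compat_l with (r := K) in Hd; [|lra].
      replace (K*(r/K)) with r in Hd by (field; lra). lra. }
    split; [exact Heq|split].
    + intros eps heps.
      set (r := Rmin (eps*eps) (rho*rho)).
      assert (hr : 0 < r) by (unfold r; apply Rmin_case; nra).
      exists (sqrt (r / K)). split. apply sqrt_lt_R0, Rdiv_lt_0_compat; lra.
      intros T X Y HS Hd t ht hT.
      assert (H1 := Hsol T X Y r HS ltac:(split; [lra|unfold r; apply Rmin_r]) (Hdelta X Y r hr Hd) t ht hT).
      assert (H2 := Wge (X t - x0) (Y t)).
      assert (H3 : r <= eps*eps) by (unfold r; apply Rmin_l).
      unfold dist2. rewrite <- (sqrt_square eps) by lra.
      apply sqrt_lt_1_alt. split. apply Rplus_le_le_0_compat; apply pow2_ge_0. lra.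
    + exists (sqrt (rho*rho / K)). split. apply sqrt_lt_R0, Rdiv_lt_0_compat; nra.
      intros X Y HS Hd.
      assert (H0 := Hdelta X Y (rho*rho) ltac:(nra) Hd).
      assert (Hall := Hsol p_infty X Y (rho*rho) HS ltac:(split; nra) H0).
      assert (Hdec := decay (fun s => (X s - x0)*(X s - x0) + K*(Y s * Y s))
        (fun s => 2*(X s - x0)*P (X s) (Y s) + 2*K*(Y s)*Q (X s) (Y s)) k ltac:(lra)).
      simpl in Hdec.
      assert (Hdec' : forall t, 0 <= t -> ((X t - x0)*(X t - x0) + K*(Y t * Y t)) * (1 + k*t)
                 <= (X 0 - x0)*(X 0 - x0) + K*(Y 0 * Y 0)).
      { apply Hdec.
        - intros t ht. destruct (HS t ht I). apply W_deriv; auto.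
        - intros t ht. apply Hineq. apply Hall; simpl; auto.
        - intros t ht. apply Wpos. }
      split.
      * apply (lim_from_decay (fun s => (X s - x0)*(X s - x0) + K*(Y s * Y s)) X x0 k
          ((X 0 - x0)*(X 0 - x0) + K*(Y 0 * Y 0))); auto.
        intros t ht. assert (H1 := Wge (X t - x0) (Y t)). simpl.
        assert (0 <= (Y t - 0)^2) by apply pow2_ge_0. simpl in H1, H. lra.
      * apply (lim_from_decay (fun s => (X s - x0)*(X s - x0) + K*(Y s * Y s)) Y 0 k
          ((X 0 - x0)*(X 0 - x0) + K*(Y 0 * Y 0))); auto.
        intros t ht. assert (H1 := Wge (X t - x0) (Y t)). simpl.
        assert (0 <= (X t - x0)^2) by apply pow2_ge_0. simpl in H1, H. lra.
  - intros Ha. split; auto. exists (-e), (x0 - 1 - m/b).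
    unfold jac_eigenvalues, jac_tr, jac_det. rewrite JxP, JyP, JxQ, JyQ.
    split. split; ring.
    split. lra.
    assert (x0 > (m+b)/b). { unfold x0. apply Rmult_lt_reg_r with e; auto.
      replace (a/e*e) with a by (field; lra). replace ((m+b)/b*e) with (e*(m+b)/b) by (field; lra). lra. }
    assert ((m+b)/b = 1 + m/b) by (field; lra). lra.
  - intros Ha HnN.
    assert (hx0' : x0 = (m+b)/b) by (unfold x0; rewrite Ha; field; lra).
    assert (JyQ0 : dy Q x0 0 = 0) by (rewrite JyQ, hx0'; field; lra).
    split; auto. unfold jac_det, jac_tr. rewrite JxP, JyP, JxQ, JyQ0.
    split. ring. split. lra.
    exists (-x0/e), 1, 0, 1.
    split. right; lra. split. right; lra.
    split. field; lra. split. ring. split. ring. split. ring.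
    assert (Hxx : dxx Q x0 0 = 0).
    { unfold dxx. rewrite (Derive_ext _ (fun _ => 0)). apply Derive_const.
      intros u. unfold dx, Q. rewrite dxQ. unfold Rdiv; ring. }
    assert (Hxy : dxy Q x0 0 = 1).
    { unfold dxy. rewrite (Derive_ext _ (fun v => v/(1+g*v))).
      apply is_derive_unique. auto_derive. lra. field.
      intros v. unfold dx, Q. apply dxQ. }
    assert (Hyy : dyy Q x0 0 = -2*g*x0 + 2*m*n/(b*b)).
    { unfold dyy, dy, Q. apply dyyQ; auto. }
    unfold hess_vv. rewrite Hxx, Hxy, Hyy.
    intros H0. apply HnN.
    apply (Rmult_eq_reg_l (2*m/(b*b))).
    2: { apply Rgt_not_eq, Rdiv_lt_0_compat; nra. }
    replace (2*m/(b*b)*n) with (2*x0/e + 2*g*x0).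
    rewrite hx0'. field. repeat split; lra.
    replace (2*m/(b*b)*n) with (2*m*n/(b*b)) by (field; lra).
    assert (H1 : 2*(-x0/e)*1*1 + 1^2*(-2*g*x0 + 2*m*n/(b*b)) = 0) by (rewrite <- H0; ring). unfold Rdiv in *. lra.
Qed.
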